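(* Let $G$ be a finitely generated residually finite group with profinite completion $\hat G$, let $H$ be a finite group, let $\bar w\in F^r(y_1,\dots,y_k,x_1,\dots,x_n)\cap Sys(Fin)$, and let $\bar a\in\hat G^k$. Then there exists $\bar u\in\hat G^n$ such that for every $N\in\mathfrak{M}$ and every $\bar f\in (H^{G_N})^k$ there exists $\bar\phi\in (H^{G_N})^n$ with $\bar w((\bar f,\bar a_N),(\bar\phi,\bar u_N))=1$ in $H\wr G_N$. (Such $\bar u$ is called an $(H,\bar a)$-universal solution of $\bar w$.)
   Context: $F=F(\bar y,\bar x)$ is the free group on constant symbols $y_1,\dots,y_k$ and variable symbols $x_1,\dots,x_n$; $\bar w\in F^r$ is a system of equations, evaluated by substitution in any group. $Sys(Fin)$ is the set of finite systems $\bar w$ solvable in every finite group $Q$, i.e. for every $\bar c\in Q^k$ there is $\bar z\in Q^n$ with $\bar w(\bar c,\bar z)=1$. $\mathfrak{M}$ is the set of normal subgroups of finite index of $G$; for $N\in\mathfrak{M}$, $G_N=G/N$, and $\eta_N:\hat G\to G_N$ is the canonical epimorphism from the profinite completion $\hat G=\varprojlim G_N$. For $g\in\hat G$, $g_N=\eta_N(g)$, and for tuples $\bar g=(g_1,\dots,g_m)$, $\bar g_N=((g_1)_N,\dots,(g_m)_N)$. For $\bar f=(f_1,\dots,f_m)\in (H^{G_N})^m$ and $\bar g\in G_N^m$, $(\bar f,\bar g)=((f_1,g_1),\dots,(f_m,g_m))\in (H\wr G_N)^m$. The wreath product $H\wr Q$ is $H^Q\rtimes Q$ with $(g.f)(x)=f(xg)$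 and $(f,g)(f',g')=(f\,(g.f'),gg')$. *)

(* Defs.v *)
From HB Require Import structures.
From mathcomp Require Import all_boot all_fingroup.

Set Implicit Arguments.
Unset Strict Implicit.
Unset Printing Implicit Defensive.

Local Open Scope group_scope.

(* An element of the free group is represented by any word term denoting it;*)
(* evaluation in a group does not depend on the chosen representative.      *)
Inductive gword (X : Type) : Type :=
  | WLetter of X
  | WOne
  | WMul of gword X & gword X
  | WInv of gword X.
Arguments WOne {X}.

(* Evaluation with explicitly given operations (used for the wreath product,
   whose elements are represented via coset representatives). *)
Fixpoint weval_with (X T : Type) (mul : T -> T -> T) (inv : T -> T) (one : T)
    (v : X -> T) (w : gword X) : T :=
  match w with
  | WLetter x => v x
  | WOne => one
  | WMul a b => mul (weval_with mul inv one v a) (weval_with mul inv one v b)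
  | WInv a => inv (weval_with mul inv one v a)
  end.

Definition weval (X : Type) (T : groupType) (v : X -> T) (w : gword X) : T :=
  weval_with (fun a b : T => a * b) (fun a : T => a^-1) 1 v w.

(* F(y_1..y_k, x_1..x_n): alphabet 'I_k (constants) + 'I_n (variables). *)
Definition FW (k n : nat) := gword ('I_k + 'I_n).

Definition val2 (T : Type) (k n : nat) (c : 'I_k -> T) (z : 'I_n -> T)
    : 'I_k + 'I_n -> T :=
  fun l => match l with inl i => c i | inr j => z j end.

Definition SysFin (k n r : nat) (w : 'I_r -> FW k n) : Prop :=
  forall (Q : finGroupType) (c : 'I_k -> Q),
    exists z : 'I_n -> Q, forall i, weval (val2 c z) (w i) = 1.

Definition finitely_generated (G : groupType) : Prop :=
  exists (m : nat) (s : 'I_m -> G),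
    forall g : G, exists t : gword 'I_m, weval s t = g.

Definition fi_normal (G : groupType) (N : G -> Prop) : Prop :=
  [/\ N 1,
      (forall x y, N x -> N y -> N (x * y)),
      (forall x, N x -> N x^-1),
      (forall x g, N x -> N (g^-1 * x * g)) &
      (exists s : seq G, forall g, exists2 x, x \in s & N (x^-1 * g))].

Definition residually_finite (G : groupType) : Prop :=
  forall g : G, g <> 1 -> exists N, fi_normal N /\ ~ N g.

(* Profinite completion: hat G = lim G/N over the finite-index normal
   subgroups N, ordered by reverse inclusion.  An element is a compatible
   family (g_N)_N of cosets g_N in G/N, represented by a choice of
   representatives  a N : G  (values at non-fi-normal N are irrelevant);
   compatibility: for N <= M, a N and a M lie in the same coset of M. *)
Definition compatible (G : groupType) (a : (G -> Prop) -> G) : Prop :=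
  forall N M : G -> Prop, fi_normal N -> fi_normal M ->
    (forall x, N x -> M x) -> M ((a N)^-1 * a M).

Definition profinite (G : groupType) := {a : (G -> Prop) -> G | compatible a}.

Definition eta (G : groupType) (N : G -> Prop) (g : profinite G) : G :=
  sval g N.

(* Wreath product H wr G_N = H^{G_N} x| G_N.  An element of H^{G_N} is      *)
(* represented by a function f : G -> H that is constant on N-cosets, and   *)
(* an element of G_N by a representative in G.                              *)
(*   (f,g)(f',g') = (f (g.f'), g g'),  (g.f)(x) = f(x g).                    *)
Definition N_invariant (G : groupType) (H : finGroupType) (N : G -> Prop)
    (f : G -> H) : Prop :=
  forall x y : G, N (x^-1 * y) -> f x = f y.

Definition wr_mul (G : groupType) (H : finGroupType)
    (p q : (G -> H) * G) : (G -> H) * G :=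
  (fun x => p.1 x * q.1 (x * p.2), p.2 * q.2).

Definition wr_inv (G : groupType) (H : finGroupType)
    (p : (G -> H) * G) : (G -> H) * G :=
  (fun x => (p.1 (x * p.2^-1))^-1, p.2^-1).

Definition wr_one (G : groupType) (H : finGroupType) : (G -> H) * G :=
  (fun _ => 1, 1).

Definition wr_eval (G : groupType) (H : finGroupType) (X : Type)
    (v : X -> (G -> H) * G) (w : gword X) : (G -> H) * G :=
  weval_with (@wr_mul G H) (@wr_inv G H) (@wr_one G H) v w.

Definition wr_is_one (G : groupType) (H : finGroupType) (N : G -> Prop)
    (p : (G -> H) * G) : Prop :=
  (forall x, p.1 x = 1) /\ N p.2.

(* Main.v *)
Require Import Defs.
From mathcomp Require Import all_boot all_fingroup.
From mathcomp Require Import boolp classical_sets filter.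
From Stdlib Require List.
Local Open Scope group_scope.

Module Aux.
Set Implicit Arguments.
Unset Strict Implicit.

Section NLemmas.
Variables (G : groupType) (N : G -> Prop).
Hypothesis fiN : fi_normal N.

Lemma N1 : N 1. Proof. by case: fiN. Qed.
Lemma NM x y : N x -> N y -> N (x * y). Proof. by case: fiN => _ h _ _ _; apply: h. Qed.
Lemma NV x : N x -> N x^-1. Proof. by case: fiN => _ _ h _ _; apply: h. Qed.
Lemma NJ x g : N x -> N (g^-1 * x * g). Proof. by case: fiN => _ _ _ h _; apply: h. Qed.
Lemma Nsym x y : N (x^-1 * y) -> N (y^-1 * x).
Proof. by move/NV; rewrite invMg invgK. Qed.
Lemma Ntr x y z : N (x^-1 * y) -> N (y^-1 * z) -> N (x^-1 * z).
Proof. by move=> h1 h2; have := NM h1 h2; rewrite -mulgA mulVKg. Qed.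
Lemma Nrefl x : N (x^-1 * x). Proof. by rewrite mulVg; exact: N1. Qed.
Lemma Nright x y g : N (x^-1 * y) -> N ((x * g)^-1 * (y * g)).
Proof. by move/(NJ g); rewrite invMg !mulgA. Qed.
Lemma Nleft x y g : N (x^-1 * y) -> N ((g * x)^-1 * (g * y)).
Proof. by rewrite invMg -mulgA (mulgA g^-1) mulVg mul1g. Qed.
End NLemmas.

Section WrCongr.
Variables (G : groupType) (H : finGroupType) (N : G -> Prop).
Hypothesis fiN : fi_normal N.


Lemma wr_evalM X (v : X -> (G -> H) * G) a b :
  wr_eval v (WMul a b) = wr_mul (wr_eval v a) (wr_eval v b).
Proof. by []. Qed.
Lemma wr_evalV X (v : X -> (G -> H) * G) a :
  wr_eval v (WInv a) = wr_inv (wr_eval v a).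
Proof. by []. Qed.

Lemma wr_inv1 (p : (G -> H) * G) y : (wr_inv p).1 y = (p.1 (y * p.2^-1))^-1.
Proof. by []. Qed.
Lemma wr_inv2 (p : (G -> H) * G) : (wr_inv p).2 = p.2^-1.
Proof. by []. Qed.
Lemma wr_mul1 (p q : (G -> H) * G) y : (wr_mul p q).1 y = p.1 y * q.1 (y * p.2).
Proof. by []. Qed.
Lemma wr_mul2 (p q : (G -> H) * G) : (wr_mul p q).2 = p.2 * q.2.
Proof. by []. Qed.

Lemma wr_congr X (v v' : X -> (G -> H) * G) :
  (forall x, N_invariant N (v x).1) ->
  (forall x y, (v x).1 y = (v' x).1 y) ->
  (forall x, N ((v x).2^-1 * (v' x).2)) ->
  forall t, [/\ N_invariant N (wr_eval v t).1,
               (forall y, (wr_eval v t).1 y = (wr_eval v' t).1 y) &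
               N ((wr_eval v t).2^-1 * (wr_eval v' t).2)].
Proof.
move=> hi he hn; elim=> [x||a [ia ea na] b [ib eb nb]|a [ia ea na]]; rewrite ?wr_evalM ?wr_evalV.
- by split=> [|y|]; [exact: hi|exact: he|exact: hn].
- split=> //; exact: (Nrefl fiN).
- split.
  + move=> y y' hy /=; rewrite (ia _ _ hy); congr (_ * _); apply: ib.
    exact: Nright.
  + move=> y /=; rewrite ea -eb; congr (_ * _); apply: ib.
    by apply: Nleft.
  + rewrite /= invMg.
    have -> : (wr_eval v b).2^-1 * (wr_eval v a).2^-1 *
        ((wr_eval v' a).2 * (wr_eval v' b).2) =
      ((wr_eval v b).2^-1 * ((wr_eval v a).2^-1 * (wr_eval v' a).2) * (wr_eval v b).2)
      * ((wr_eval v b).2^-1 * (wr_eval v' b).2).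
      by rewrite !mulgA mulgK.
    apply: NM => //; exact: NJ.
- have nn : N ((wr_eval v a).2 * (wr_eval v' a).2^-1).
    have := NJ fiN ((wr_eval v' a).2^-1) (Nsym fiN na).
    by rewrite invgK mulVKg.
  split.
  + move=> y y' hy; rewrite !wr_inv1; congr (_^-1); apply: ia; exact: Nright.
  + move=> y; rewrite !wr_inv1; congr (_^-1); rewrite -ea; apply: ia.
    by rewrite invMg -mulgA (mulgA y^-1) mulVg mul1g invgK.
  + by rewrite !wr_inv2 invgK.
Qed.

Lemma wr_is_one_congr X (v v' : X -> (G -> H) * G) t :
  (forall x, N_invariant N (v x).1) ->
  (forall x y, (v x).1 y = (v' x).1 y) ->
  (forall x, N ((v x).2^-1 * (v' x).2)) ->
  wr_is_one N (wr_eval v t) -> wr_is_one N (wr_eval v' t).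
Proof.
move=> hi he hn [h1 h2]; have [_ e n2] := wr_congr hi he hn t.
split; first by move=> y; rewrite -e.
have := NM fiN h2 n2; by rewrite mulVKg.
Qed.
End WrCongr.

Definition Works (G : groupType) (H : finGroupType) (k n r : nat)
  (w : 'I_r -> FW k n) (N : G -> Prop) (ca : 'I_k -> G) (v : 'I_n -> G) : Prop :=
  forall f : 'I_k -> (G -> H), (forall i, N_invariant N (f i)) ->
    exists phi : 'I_n -> (G -> H), (forall j, N_invariant N (phi j)) /\
      forall i, wr_is_one N (wr_eval (val2 (fun l => (f l, ca l))
                                           (fun j => (phi j, v j))) (w i)).

Lemma Works_congr (G : groupType) (H : finGroupType) (k n r : nat)
  (w : 'I_r -> FW k n) (N : G -> Prop) ca ca' v v' :
  fi_normal N -> Works H w N ca v ->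
  (forall l, N ((ca l)^-1 * ca' l)) -> (forall j, N ((v j)^-1 * v' j)) ->
  Works H w N ca' v'.
Proof.
move=> fiN hw hc hv f hf; have [phi [hphi hwi]] := hw f hf.
exists phi; split => // i; apply: (wr_is_one_congr fiN _ _ _ (hwi i)).
- by case=> x /=; [apply: hf|apply: hphi].
- by case.
- by case=> x /=; [apply: hc|apply: hv].
Qed.

Section WevalLemmas.
Variables (X : Type) (T : groupType) (v : X -> T).
Lemma wevalM a b : weval v (WMul a b) = weval v a * weval v b. Proof. by []. Qed.
Lemma wevalV a : weval v (WInv a) = (weval v a)^-1. Proof. by []. Qed.
Lemma weval1 : weval v WOne = 1. Proof. by []. Qed.
Lemma wevalL x : weval v (WLetter x) = v x. Proof. by []. Qed.
End WevalLemmas.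

Lemma nthIn (A : Type) (L : seq A) i d : i < size L -> List.In (List.nth i L d) L.
Proof.
elim: L i => [|x L IH] [|i] //=; first by left.
by move=> hi; right; apply: IH.
Qed.

Lemma Innth (A : Type) (L : seq A) N d : List.In N L -> exists2 i, i < size L & List.nth i L d = N.
Proof.
elim: L => [|x L IH] //= [->|/IH [i hi e]]; first by exists 0.
by exists i.+1.
Qed.

Lemma reps_ex (G : groupType) (N : G -> Prop) :
  exists s : seq G, fi_normal N -> forall g, exists2 x, x \in s & N (x^-1 * g).
Proof.
case: (pselect (fi_normal N)) => [h|h]; last by exists [::].
by case: (h) => _ _ _ _ [s hs]; exists s.
Qed.

Section Core.
Variables (G : groupType) (H : finGroupType) (k n r : nat) (w : 'I_r -> FW k n).
Variable L : seq (G -> Prop).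
Hypothesis hL : forall N, List.In N L -> fi_normal N.
Variable m : 'I_k -> G.
Hypothesis sysw : SysFin w.

Definition l := size L.
Definition NN (i : nat) : G -> Prop := List.nth i L (fun _ => True).
Lemma fiNN i : i < l -> fi_normal (NN i).
Proof. by move=> hi; apply: hL; apply: nthIn. Qed.

Definition S i : seq G := projT1 (cid (reps_ex (NN i))).
Lemma S_cover i : i < l -> forall g, exists2 x, x \in S i & NN i (x^-1 * g).
Proof. by move=> hi; apply: (projT2 (cid (reps_ex (NN i)))); apply: fiNN. Qed.

Definition C := \max_(i < l) size (S i).
Lemma leC i : i < l -> size (S i) <= C.
Proof. by move=> hi; apply: (@leq_bigmax _ (fun i : 'I_l => size (S i)) (Ordinal hi)). Qed.

Definition bv (i : nat) (y : G) : {ffun 'I_C -> bool} :=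
  [ffun x : 'I_C => `[< NN i ((nth 1 (S i) x)^-1 * y) >]].

Lemma bv_eqE i y y' : i < l -> (bv i y = bv i y') <-> NN i (y^-1 * y').
Proof.
move=> hi; have fi := fiNN hi; split.
- move=> e; have [x xs hx] := S_cover hi y.
  have hx' : index x (S i) < C by apply: leq_trans (leC hi); rewrite index_mem.
  have := congr1 (fun F : {ffun 'I_C -> bool} => F (Ordinal hx')) e; rewrite !ffunE /= nth_index //.
  rewrite (asboolT hx) => /esym/asboolP hy.
  have h1 := Nsym fi hx; exact: (Ntr fi h1 hy).
- move=> hyy; apply/ffunP => x; rewrite !ffunE; apply: asbool_equiv_eq; split => h.
  + exact: (Ntr fi h hyy).
  + have h1 := Nsym fi hyy; exact: (Ntr fi h h1).
Qed.

Definition ex_b i (b : {ffun 'I_C -> bool}) := exists y, b = bv i y.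
Definition yof i b : G := if pselect (ex_b i b) is left h then projT1 (cid h) else 1.
Lemma yofP i b : ex_b i b -> b = bv i (yof i b).
Proof. by rewrite /yof; case: pselect => // h _; exact: projT2 (cid h). Qed.

Lemma yof_bv i y : i < l -> NN i ((yof i (bv i y))^-1 * y).
Proof.
move=> hi; have e : bv i y = bv i (yof i (bv i y)).
  by apply: yofP; exists y.
by apply: (proj1 (bv_eqE _ _ hi)); exact: esym e.
Qed.

Definition act i g b := if pselect (ex_b i b) is left _ then bv i (yof i b * g) else b.

Lemma act_bv i g y : i < l -> act i g (bv i y) = bv i (y * g).
Proof.
move=> hi; rewrite /act; case: pselect => [h|[]]; last by exists y.
apply: (proj2 (bv_eqE _ _ hi)); apply: Nright; [exact: fiNN|exact: yof_bv].
Qed.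

Lemma act_nb i g b : ~ ex_b i b -> act i g b = b.
Proof. by rewrite /act; case: pselect. Qed.

Lemma actM i g h b : i < l -> act i (g * h) b = act i h (act i g b).
Proof.
move=> hi; case: (pselect (ex_b i b)) => [[y ->]|nb].
  by rewrite !act_bv // mulgA.
by rewrite !act_nb.
Qed.

Lemma act1 i b : i < l -> act i 1 b = b.
Proof.
move=> hi; case: (pselect (ex_b i b)) => [[y ->]|nb].
  by rewrite act_bv // mulg1.
by rewrite act_nb.
Qed.

Definition Fty := {ffun 'I_k -> {ffun {ffun 'I_C -> bool} -> H}}.
Definition Raw := ('I_l * Fty * {ffun 'I_C -> bool})%type.
Definition alpha g (o : Raw) : Raw := (o.1, act o.1.1 g o.2).

Lemma alphaM g h o : alpha (g * h) o = alpha h (alpha g o).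
Proof. by rewrite /alpha /= actM. Qed.
Lemma alpha1 o : alpha 1 o = o.
Proof. by case: o => o1 o2; rewrite /alpha /= act1. Qed.
Lemma alphaK g : cancel (alpha g) (alpha g^-1).
Proof. by move=> o; rewrite -alphaM mulgV alpha1. Qed.

Definition T := (Raw * H)%type.
Definition rhof (phi : Raw -> H) g (p : T) : T := (alpha g p.1, p.2 * phi p.1).
Lemma rhof_inj phi g : injective (rhof phi g).
Proof.
move=> [o1 h1] [o2 h2] e.
have e1 : alpha g o1 = alpha g o2 := congr1 fst e.
have e2 : h1 * phi o1 = h2 * phi o2 := congr1 snd e.
have eo : o1 = o2 by apply: (can_inj (alphaK g)).
by subst o2; move/mulIg: e2 => ->.
Qed.
Definition rho phi g : {perm T} := perm (@rhof_inj phi g).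

Lemma rho_mul phi g psi g' :
  rho phi g * rho psi g' = rho (fun o => phi o * psi (alpha g o)) (g * g').
Proof. by apply/permP => -[o h]; rewrite permM !permE /rhof /= alphaM mulgA. Qed.
Lemma rho1 : rho (fun _ => 1) 1 = 1.
Proof. by apply/permP => -[o h]; rewrite permE perm1 /rhof /= alpha1 mulg1. Qed.

Definition Qset : {set {perm T}} :=
  finset (fun p => `[< exists phi g, p = rho phi g >]).

Lemma Qgs : group_set Qset.
Proof.
apply/group_setP; split.
  by rewrite inE; apply/asboolP; exists (fun _ => 1), 1; rewrite rho1.
move=> x y; rewrite !inE => hx hy.
have [phi [g ex]] := hx; have [psi [g' ey]] := hy.
by rewrite ex ey rho_mul; eexists; eexists.
Qed.
Definition Qg : {group {perm T}} := Group Qgs.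
Definition Qt := subg_of Qg.

Lemma sgvalM' (u v : Qt) : sgval (u * v) = sgval u * sgval v. Proof. by []. Qed.
Lemma sgvalV' (u : Qt) : sgval (u^-1) = (sgval u)^-1. Proof. by []. Qed.

Definition Phi (j : 'I_k) (o : Raw) : H := o.1.2 j o.2.
Definition cst (j : 'I_k) : Qt := subg Qg (rho (Phi j) (m j)).
Lemma cst_val j : sgval (cst j) = rho (Phi j) (m j).
Proof. by rewrite /cst subgK // inE; apply/asboolP; exists (Phi j), (m j). Qed.

Lemma core : exists v : 'I_n -> G, forall i, i < l -> Works H w (NN i) m v.
Proof.
have [z hz] := sysw cst.
have dec : forall j, {pg : (Raw -> H) * G | sgval (z j) = rho pg.1 pg.2}.
  move=> j; apply: cid; have := subgP (z j); rewrite inE => /asboolP [phi [g e]].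
  by exists (phi, g).
pose psi j := (projT1 (dec j)).1; pose gj j := (projT1 (dec j)).2.
exists gj => i hi f finv.
pose io := Ordinal hi.
pose Fenc : Fty := [ffun j => [ffun b => f j (yof i b)]].
have fiN := fiNN hi.
pose phi' j y := psi j ((io, Fenc), bv i y).
exists phi'; split.
  by move=> j y y' hy; rewrite /phi' ((bv_eqE _ _ hi).2 hy).
move=> i'.
pose E t := wr_eval (val2 (fun l0 => (f l0, m l0)) (fun j => (phi' j, gj j))) t.
have claim : forall t y h, sgval (weval (val2 cst z) t) ((io, Fenc, bv i y), h) =
    ((io, Fenc, bv i (y * (E t).2)), h * (E t).1 y).
  elim=> [[l0|j]||a IHa b IHb|a IHa] y h.
  - rewrite wevalL /= cst_val permE /rhof /alpha /= act_bv // /Phi /= !ffunE.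
    congr (_, _ * _); apply: finv; exact: yof_bv.
  - rewrite wevalL /= (projT2 (dec j)) permE /rhof /alpha /= act_bv //.
  - by rewrite weval1 /= perm1 !mulg1.
    rewrite wevalM sgvalM' permM IHa IHb /E wr_evalM wr_mul1 wr_mul2.
    by rewrite !mulgA.
  - rewrite wevalV sgvalV'.
    have -> : ((io, Fenc, bv i y), h) = sgval (weval (val2 cst z) a)
        ((io, Fenc, bv i (y * (E a).2^-1)), h * ((E a).1 (y * (E a).2^-1))^-1).
      by rewrite IHa !mulgVK.
    by rewrite permK /E wr_evalV wr_inv1 wr_inv2.
have := claim (w i') 1 1; rewrite hz perm1 => -[e1 e2].
split.
- move=> y; have := claim (w i') y 1; rewrite hz perm1 => -[_].
  by rewrite mul1g => <-.
- by move: e1 => /(bv_eqE _ _ hi); rewrite invg1 !mul1g.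
Qed.
End Core.

Section Inter.
Variable G : groupType.

Lemma fi_ext (P Q : G -> Prop) : (forall y, P y <-> Q y) -> fi_normal P -> fi_normal Q.
Proof.
move=> e [h1 h2 h3 h4 [s hs]]; split.
- by apply/e.
- by move=> x y /e hx /e hy; apply/e; apply: h2.
- by move=> x /e hx; apply/e; apply: h3.
- by move=> x g /e hx; apply/e; apply: h4.
- by exists s => g; have [x xs hx] := hs g; exists x => //; apply/e.
Qed.

Lemma fi_True : fi_normal (fun _ : G => True).
Proof. by split=> //; exists [:: 1] => g; exists 1 => //; rewrite inE. Qed.

Lemma pick_ex (N1 N2 : G -> Prop) x1 x2 :
  exists q : G, (exists g, N1 (x1^-1 * g) /\ N2 (x2^-1 * g)) -> N1 (x1^-1 * q) /\ N2 (x2^-1 * q).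
Proof.
case: (pselect (exists g, N1 (x1^-1 * g) /\ N2 (x2^-1 * g))) => [[g hg]|h].
  by exists g.
by exists 1.
Qed.

Lemma fi_I (N1 N2 : G -> Prop) : fi_normal N1 -> fi_normal N2 ->
  fi_normal (fun y => N1 y /\ N2 y).
Proof.
move=> f1 f2; have f1' := f1; have f2' := f2.
case: f1' => a1 b1 c1 d1 [s1 hs1]; case: f2' => a2 b2 c2 d2 [s2 hs2].
split.
- by [].
- by move=> x y [? ?] [? ?]; split; [apply: b1|apply: b2].
- by move=> x [? ?]; split; [apply: c1|apply: c2].
- by move=> x g [? ?]; split; [apply: d1|apply: d2].
pose p x1 x2 := projT1 (cid (pick_ex N1 N2 x1 x2)).
exists [seq p x1 x2 | x1 <- s1, x2 <- s2] => g.
have [x1 xs1 h1] := hs1 g; have [x2 xs2 h2] := hs2 g.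
have [q1 q2] : N1 (x1^-1 * p x1 x2) /\ N2 (x2^-1 * p x1 x2).
  by apply: (projT2 (cid (pick_ex N1 N2 x1 x2))); exists g.
exists (p x1 x2); first exact: allpairs_f.
split.
- have q1' := Nsym f1 q1; exact: (Ntr f1 q1' h1).
- have q2' := Nsym f2 q2; exact: (Ntr f2 q2' h2).
Qed.

Definition Int (L : seq (G -> Prop)) (y : G) : Prop := forall N, List.In N L -> N y.

Lemma fi_Int L : (forall N, List.In N L -> fi_normal N) -> fi_normal (Int L).
Proof.
elim: L => [|N L IH] hL.
  by apply: (fi_ext _ fi_True) => y; split => // _ N [].
have fN : fi_normal N by apply: hL; left.
have fL : fi_normal (Int L) by apply: IH => N' h; apply: hL; right.
apply: (fi_ext _ (fi_I fN fL)) => y; split.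
- by move=> [h1 h2] N' [<-|h]; [|apply: h2].
- by move=> h; split; [apply: h; left|move=> N' h'; apply: h; right].
Qed.
End Inter.

Lemma multi (G : groupType) (H : finGroupType) (k n r : nat) (w : 'I_r -> FW k n)
  (a : 'I_k -> profinite G) (L : seq (G -> Prop)) :
  (forall N, List.In N L -> fi_normal N) -> SysFin w ->
  exists v : 'I_n -> G, forall N, List.In N L -> Works H w N (fun l => eta N (a l)) v.
Proof.
move=> hL sw.
have fM := fi_Int hL.
have [v hv] := core H hL (fun l => eta (Int L) (a l)) sw.
exists v => N hN; have [i hi e] := Innth (fun _ : G => True) hN.
have fN := hL N hN.
have := hv i hi; rewrite /NN e => hw.
apply: (Works_congr fN hw).
- move=> l; apply: (proj2_sig (a l)) => // y hy; exact: hy.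
- move=> j; exact: (Nrefl fN).
Qed.

Lemma U_fin (I : Type) (U : set_system I) (FU : Filter U) (X : eqType) (s : seq X)
  (P : X -> I -> Prop) :
  (forall x, x \in s -> U (P x)) -> U (fun L => forall x, x \in s -> P x L).
Proof.
elim: s => [|x s IH] h.
  by apply: filterS filterT => L _ x; rewrite in_nil.
have h1 := h x (mem_head x s).
have h2 : U (fun L => forall y, y \in s -> P y L).
  by apply: IH => y ys; apply: h; rewrite inE ys orbT.
apply: filterS (filterI h1 h2) => L [hx hs] y; rewrite inE => /orP [/eqP ->|ys] //.
exact: hs.
Qed.

Lemma pigeon (G : groupType) (I : Type) (U : set_system I) (UU : UltraFilter U)
  (N : G -> Prop) (t : I -> G) :
  fi_normal N -> exists x, U (fun L => N (x^-1 * t L)).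
Proof.
move=> fN; apply: contrapT => hn.
have hc : forall x, U (setC (fun L => N (x^-1 * t L))).
  move=> x; case: (in_ultra_setVsetC (fun L => N (x^-1 * t L)) UU) => // hx.
  by case: hn; exists x.
have fN' := fN; case: fN' => _ _ _ _ [s hs].
have FU : Filter U := @filter_filter _ U (@ultra_proper _ U UU).
have := @U_fin I U FU G s (fun x => setC (fun L => N (x^-1 * t L))) (fun x _ => hc x).
move=> /filter_ex [L hL].
have [x xs hx] := hs (t L).
exact: (hL x xs hx).
Qed.

End Aux.
Import Aux.

Theorem lemma2 (G : groupType) (H : finGroupType) (k n r : nat)
    (w : 'I_r -> FW k n) (a : 'I_k -> profinite G) :
  finitely_generated G -> residually_finite G -> SysFin w ->
  exists u : 'I_n -> profinite G,
    forall N : G -> Prop, fi_normal N ->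
    forall f : 'I_k -> (G -> H), (forall i, N_invariant N (f i)) ->
    exists phi : 'I_n -> (G -> H),
      (forall j, N_invariant N (phi j)) /\
      forall i : 'I_r,
        wr_is_one N
          (wr_eval (val2 (fun l => (f l, eta N (a l)))
                         (fun j => (phi j, eta N (u j)))) (w i)).
Proof.
move=> _ _ sw.
pose I := seq (G -> Prop).
pose Allfi (L : I) := forall N, List.In N L -> fi_normal N.
have Vex : forall L : I, exists v : 'I_n -> G,
    Allfi L -> forall N, List.In N L -> Works H w N (fun l => eta N (a l)) v.
  move=> L; case: (pselect (Allfi L)) => [h|h].
    by have [v hv] := @multi G H k n r w a L h sw; exists v => _.
  by exists (fun _ => 1) => /h.
pose V L := projT1 (cid (Vex L)).
have VP : forall L, Allfi L -> forall N, List.In N L -> Works H w N (fun l => eta N (a l)) (V L).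
  by move=> L; exact: (projT2 (cid (Vex L))).
pose F0 : set_system I := fun X => exists l : I, Allfi l /\
   forall L, (forall N, List.In N l -> List.In N L) -> Allfi L -> X L.
have F0F : Filter F0.
  constructor.
  - by exists [::]; split => // N [].
  - move=> A B [l1 [h1 hA]] [l2 [h2 hB]]; exists (l1 ++ l2); split.
      by move=> N hN; case: (List.in_app_or _ _ _ hN) => ?; [apply: h1|apply: h2].
    move=> L hi ha; split; [apply: hA|apply: hB] => // N hN; apply: hi;
      apply: List.in_or_app; by [left|right].
  - by move=> P Q PQ [l [hl hP]]; exists l; split => // L hi ha; apply: PQ; apply: hP.
have F0P : ProperFilter F0.
  apply: Build_ProperFilter_ex => P [l [hl hP]]; exists l; exact: hP.
have [U [UU F0U]] := ultraFilterLemma F0P.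
have FU : Filter U := @filter_filter _ U (@ultra_proper _ U UU).
have PU : ProperFilter U := @ultra_proper _ U UU.
have uex : forall (j : 'I_n) (N : G -> Prop), exists x : G,
    fi_normal N -> U (fun L => N (x^-1 * V L j)).
  move=> j N; case: (pselect (fi_normal N)) => [h|h]; last by exists 1.
  by have [x hx] := pigeon UU (fun L => V L j) h; exists x.
pose uf j N := projT1 (cid (uex j N)).
have ufP : forall j N, fi_normal N -> U (fun L => N ((uf j N)^-1 * V L j)).
  by move=> j N; exact: (projT2 (cid (uex j N))).
have ucomp : forall j, compatible (uf j).
  move=> j N M fN fM NM.
  have [L [h1 h2]] := @filter_ex _ U PU _ (@filterI _ U FU _ _ (ufP j N fN) (ufP j M fM)).
  have h1' := NM _ h1; have h2' := Nsym fM h2; exact: (Ntr fM h1' h2').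
pose u j : profinite G := exist _ (uf j) (ucomp j).
exists u => N fN f hf.
have Ucone : U (fun L => Allfi L /\ List.In N L).
  apply: F0U; exists [:: N]; split; first by move=> N' [<-|[]].
  by move=> L hi ha; split => //; apply: hi; left.
have Uall : U (fun L => forall j, N ((uf j N)^-1 * V L j)).
  have := @U_fin I U FU _ (enum 'I_n) (fun j L => N ((uf j N)^-1 * V L j))
     (fun j _ => ufP j N fN).
  by apply: (@filterS _ U FU) => L hL j; apply: hL; rewrite mem_enum.
have [L [[hA hIn] hj]] := @filter_ex _ U PU _ (@filterI _ U FU _ _ Ucone Uall).
have hw := VP L hA N hIn.
have hw' : Works H w N (fun l => eta N (a l)) (fun j => uf j N).
  apply: (Works_congr fN hw).
  - by move=> l; exact: (Nrefl fN).
  - by move=> j; exact: (Nsym fN (hj j)).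
exact: (hw' f hf).
Qed.
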